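(* Every pluri-diamond $u:[0,1]\to{\bf Q}_2(\mathbb{R})$ is a Dirichlet $4$-quasiminimizer on $(0,1)$, i.e. for every interval $(a,b)\subset(0,1)$, $\mathrm{Dir}(u;(a,b))\le 4\,\mathrm{Dir}(v;(a,b))$ where $v$ is Dirichlet minimizing on $(a,b)$ with $v(a)=u(a)$, $v(b)=u(b)$.
   Context: ${\bf Q}_2(\mathbb{R})$ is the space of unordered pairs $[[x]]+[[y]]$ of reals with metric $\mathcal{G}([[x_1]]+[[x_2]],[[y_1]]+[[y_2]])=\min_\sigma(\sum_i|x_i-y_{\sigma(i)}|^2)^{1/2}$. For a Lipschitz $u=[[u_1]]+[[u_2]]$ with $u_1\le u_2$ on an interval $I$, $\mathrm{Dir}(u;I)=\int_I(u_1')^2+(u_2')^2\,dx$; $v$ is Dirichlet minimizing on $(a,b)$ with given endpoint values if it minimizes $\mathrm{Dir}(\cdot;(a,b))$ among (Sobolev) ${\bf Q}_2(\mathbb{R})$-valued functions with those endpoint values. A diamond above $[a,b]$ is a map $u:[a,b]\to{\bf Q}_2(\mathbb{R})$ whose graph is the parallelogram with vertices $(a,h),((a+b)/2,h),((a+b)/2,h+(b-a)/2),(b,h+(b-a)/2)$ for some $h\in\mathbb{R}$ (one branch is constant $h$ on $[a,(a+b)/2]$ then has slope $1$; the other has slope $1$ on $[a,(a+b)/2]$ then is constant). A pluri-diamond is a continuous $u:[0,1]\to{\bf Q}_2(\mathbb{R})$ admitting a partition of $[0,1]$ into intervals $I_j$ such that on each $I_j$, $u$ is either a diamond or of the form $x\mapsto2[[x+p_j]]$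 with $p_j\in\mathbb{R}$. *)

(* Defs.v *)
From HB Require Import structures.
From mathcomp Require Import all_boot all_order all_algebra.
From mathcomp Require Import all_classical all_reals all_analysis.
Set Implicit Arguments. Unset Strict Implicit. Unset Printing Implicit Defensive.
Import Order.TTheory GRing.Theory Num.Theory.
Import numFieldNormedType.Exports.
Local Open Scope classical_set_scope.
Local Open Scope ring_scope.

Section Q2.
Variable R : realType.

(* A point [[x]]+[[y]] of Q_2(R) is represented by a pair (x, y); the pair
   is read as unordered: Q2eq identifies (x,y) with (y,x). *)
Definition Q2eq (p q : R * R) : Prop :=
  (p.1 = q.1 /\ p.2 = q.2) \/ (p.1 = q.2 /\ p.2 = q.1).

Definition Gdist (p q : R * R) : R :=
  Num.sqrt (Num.min ((p.1 - q.1) ^+ 2 + (p.2 - q.2) ^+ 2)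
                    ((p.1 - q.2) ^+ 2 + (p.2 - q.1) ^+ 2)).

Definition lo (u : R -> R * R) (x : R) : R := Num.min (u x).1 (u x).2.
Definition hi (u : R -> R * R) (x : R) : R := Num.max (u x).1 (u x).2.

Definition Q2_continuous_on (u : R -> R * R) (a b : R) : Prop :=
  forall x, a <= x <= b -> forall e : R, 0 < e ->
    exists2 d : R, 0 < d & forall y, a <= y <= b -> `|y - x| < d ->
      Gdist (u y) (u x) < e.

Definition Dir (u : R -> R * R) (a b : R) : \bar R :=
  (\int[@lebesgue_measure R]_(x in `]a, b[)
     ((derive1 (lo u) x) ^+ 2 + (derive1 (hi u) x) ^+ 2)%:E)%E.

(* W^{1,2}(a,b) real function (continuous representative on [a,b]):
   f(x) = f(a) + \int_a^x g with g in L^2(a,b). *)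
Definition W12 (f : R -> R) (a b : R) : Prop :=
  exists g : R -> R,
    [/\ measurable_fun `[a, b] g,
        (@lebesgue_measure R).-integrable `[a, b] (EFin \o g),
        (\int[@lebesgue_measure R]_(x in `[a, b]) ((g x) ^+ 2)%:E < +oo)%E &
        forall x, a <= x <= b ->
          (\int[@lebesgue_measure R]_(t in `[a, x]) (g t)%:E)%E = (f x - f a)%:E].

Definition Q2_W12 (v : R -> R * R) (a b : R) : Prop :=
  W12 (lo v) a b /\ W12 (hi v) a b.

Definition dir_minimizing (v : R -> R * R) (a b : R) (pa pb : R * R) : Prop :=
  [/\ Q2_W12 v a b, Q2eq (v a) pa, Q2eq (v b) pb &
      forall w, Q2_W12 w a b -> Q2eq (w a) pa -> Q2eq (w b) pb ->
        (Dir v a b <= Dir w a b)%E].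

Definition diamond (a b h : R) (x : R) : R * R :=
  if x <= (a + b) / 2 then (h, h + (x - a))
  else (h + (x - (a + b) / 2), h + (b - a) / 2).

Definition pluri_diamond (u : R -> R * R) : Prop :=
  Q2_continuous_on u 0 1 /\
  exists (n : nat) (t : nat -> R),
    [/\ t 0%N = 0, t n = 1,
        (forall j, (j < n)%N -> t j < t j.+1) &
        forall j, (j < n)%N ->
          (exists h : R, forall x, t j <= x <= t j.+1 ->
              Q2eq (u x) (diamond (t j) (t j.+1) h x))
          \/
          (exists p : R, forall x, t j <= x <= t j.+1 ->
              Q2eq (u x) (x + p, x + p))].

End Q2.

(* Main.v *)
Require Import Defs.
From HB Require Import structures.
From mathcomp Require Import all_boot all_order all_algebra.
From mathcomp Require Import all_classical all_reals all_analysis.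
Import Order.TTheory GRing.Theory Num.Theory.
Local Open Scope ring_scope.
From mathcomp Require Import ring lra measurable_realfun.

Section Pieces.
Variable R : realType.
Implicit Types (u : R -> R * R).

Lemma Q2eq_min {p q : R * R} : Q2eq p q -> Num.min p.1 p.2 = Num.min q.1 q.2.
Proof. by case=> -[-> ->] //; rewrite minC. Qed.

Lemma Q2eq_max {p q : R * R} : Q2eq p q -> Num.max p.1 p.2 = Num.max q.1 q.2.
Proof. by case=> -[-> ->] //; rewrite maxC. Qed.

Definition Pp u (x y : R) : Prop :=
  [/\ lo u x <= lo u y, lo u y - lo u x <= y - x, hi u x <= hi u y,
      hi u y - hi u x <= y - x &
      y - x <= (lo u y + hi u y) - (lo u x + hi u x)].

Lemma Pp_refl u x : Pp u x x.
Proof. by split; rewrite ?subrr. Qed.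

Lemma Pp_trans u x y z : Pp u x y -> Pp u y z -> Pp u x z.
Proof. by case=> ? ? ? ? ?; case=> ? ? ? ? ?; split; lra. Qed.

Lemma Pp_diamond u p q h : p < q ->
  (forall x, p <= x <= q -> Q2eq (u x) (diamond p q h x)) ->
  forall x y, p <= x -> x <= y -> y <= q -> Pp u x y.
Proof.
move=> pq H.
have E z : p <= z <= q ->
   lo u z = (if z <= (p + q) / 2 then h else h + (z - (p + q) / 2)) /\
   hi u z = (if z <= (p + q) / 2 then h + (z - p) else h + (q - p) / 2).
  move=> /[dup] zI /andP[pz zq]; rewrite /lo /hi (Q2eq_min (H _ zI)) (Q2eq_max (H _ zI)).
  rewrite /diamond; case: ifP => zm /=.
    by rewrite min_l ?max_r //; lra.
  move/negbT: zm; rewrite -ltNge => zm.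
  by rewrite min_l ?max_r //; lra.
move=> x y px xy yq.
have [Lx Hx] := E x ltac:(apply/andP; split; lra).
have [Ly Hy] := E y ltac:(apply/andP; split; lra).
rewrite /Pp Lx Hx Ly Hy.
case: ifP => xm; case: ifP => ym; split; lra.
Qed.

Lemma Pp_const u p q c :
  (forall x, p <= x <= q -> Q2eq (u x) (x + c, x + c)) ->
  forall x y, p <= x -> x <= y -> y <= q -> Pp u x y.
Proof.
move=> H x y px xy yq.
have E z : p <= z <= q -> lo u z = z + c /\ hi u z = z + c.
  move=> zI; rewrite /lo /hi (Q2eq_min (H _ zI)) (Q2eq_max (H _ zI)) /=.
  by rewrite minxx maxxx.
have [Lx Hx] := E x ltac:(apply/andP; split; lra).
have [Ly Hy] := E y ltac:(apply/andP; split; lra).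
rewrite /Pp Lx Hx Ly Hy; split; lra.
Qed.

Lemma Pp_pluri u : pluri_diamond u ->
  forall x y, 0 <= x -> x <= y -> y <= 1 -> Pp u x y.
Proof.
case=> _ [n [t [t0 tn tinc tpiece]]].
have tge0 k : (k <= n)%N -> 0 <= t k.
  elim: k => [|k IH] kn; first by rewrite t0.
  have := tinc k kn; have := IH (ltnW kn); lra.
suff K k : (k <= n)%N -> forall x y, 0 <= x -> x <= y -> y <= t k -> Pp u x y.
  by move=> x y; rewrite -tn; apply: K.
elim: k => [|k IH] kn x y x0 xy yk.
  have -> : y = x by rewrite t0 in yk; lra.
  exact: Pp_refl.
have tk := tinc k kn.
have piece : forall z w, t k <= z -> z <= w -> w <= t k.+1 -> Pp u z w.
  case: (tpiece k kn) => [[h Hh]|[c Hc]].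
    exact: Pp_diamond tk Hh.
  exact: Pp_const Hc.
have [yk'|yk'] := leP y (t k); first exact: IH (ltnW kn) x y x0 xy yk'.
have [xk|xk] := leP (t k) x; first exact: piece.
apply: (@Pp_trans _ _ (t k)).
  by apply: IH (ltnW kn) _ _ x0 _ _ => //; lra.
by apply: piece => //; lra.
Qed.

End Pieces.

Section A.
Import numFieldNormedType.Exports.
Local Open Scope classical_set_scope.
Local Open Scope ring_scope.
Variable R : realType.
Notation mu := (@lebesgue_measure R).

Lemma le_integral_nm (D1 D2 : set R) (f g : R -> \bar R) :
  (forall x, D1 x -> (0 <= f x)%E) -> (forall x, D2 x -> (0 <= g x)%E) ->
  (forall x, D1 x -> D2 x /\ (f x <= g x)%E) ->
  (\int[mu]_(x in D1) f x <= \int[mu]_(x in D2) g x)%E.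
Proof.
move=> f0 g0 fg; rewrite (ge0_integralE mu f0) (ge0_integralE mu g0) /=.
apply: ge_ereal_sup => _ [h hf <-]; apply: ereal_sup_ubound; exists h => //= x.
apply: (le_trans (hf x)); rewrite /patch.
case: ifPn => [/set_mem D1x|_]; last first.
  case: ifPn => [/set_mem D2x|_]; [exact: g0|by []].
have [D2x le] := fg x D1x; by rewrite mem_set.
Qed.

Lemma derive1_01 (f : R -> R) (a b x : R) :
  (forall y z, a <= y -> y <= z -> z <= b -> 0 <= f z - f y <= z - y) ->
  a < x -> x < b -> 0 <= derive1 f x <= 1.
Proof.
move=> H ax xb.
have Q : \forall h \near (0 : R)^', 0 <= h^-1 *: (f (h + x) - f x) <= 1.
  near=> h.
  have h0 : h != 0 by near: h; exact: nbhs_dnbhs_neq.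
  have hl : `|h| < Num.min (x - a) (b - x).
    by near: h; apply: dnbhs0_lt; rewrite lt_min; apply/andP; split; lra.
  move: hl; rewrite lt_min => /andP[hl1 hl2].
  rewrite /GRing.scale /=.
  have [hp|hn] := ltP 0 h.
    rewrite gtr0_norm // in hl1 hl2.
    have /andP[H1 H2] := H x (h + x) (ltW ax) ltac:(lra) ltac:(lra).
    rewrite mulr_ge0 ?invr_ge0 ?(ltW hp) //= ler_pdivrMl // mulr1; lra.
  have hn' : h < 0 by rewrite lt_neqAle h0.
  rewrite ltr0_norm // in hl1 hl2.
  have /andP[H1 H2] := H (h + x) x ltac:(lra) ltac:(lra) (ltW xb).
  rewrite -mulrNN -invrN -opprB.
  rewrite mulr_ge0 ?invr_ge0 //=; last lra; last lra.
  rewrite ler_pdivrMl; last lra.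
  lra.
rewrite /derive1.
case: (pselect (cvg ((fun h => h^-1 *: (f (h + x) - f x)) @ (0 : R)^'))) => cv.
  apply/andP; split.
    by apply: limr_ge => //; apply: filterS Q => h /andP[].
  by apply: limr_le => //; apply: filterS Q => h /andP[].
rewrite dvgP //; change (0 <= (0:R) <= 1); lra.
Unshelve. all: by end_near. Qed.


Lemma Dir_upper (u : R -> R * R) a b : pluri_diamond u -> 0 <= a -> a < b -> b <= 1 ->
  (Dir u a b <= (2 * (b - a))%:E)%E.
Proof.
move=> pu a0 ab b1.
have Hlo y z : a <= y -> y <= z -> z <= b -> 0 <= lo u z - lo u y <= z - y.
  move=> ay yz zb; have [? ? ? ? ?] := @Pp_pluri R u pu y z ltac:(lra) yz ltac:(lra).
  apply/andP; split; lra.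
have Hhi y z : a <= y -> y <= z -> z <= b -> 0 <= hi u z - hi u y <= z - y.
  move=> ay yz zb; have [? ? ? ? ?] := @Pp_pluri R u pu y z ltac:(lra) yz ltac:(lra).
  apply/andP; split; lra.
rewrite /Dir.
apply: (@le_trans _ _ (\int[mu]_(x in `]a, b[) (cst 2%:E) x)%E).
  apply: le_integral_nm.
  - by move=> x _; rewrite lee_fin addr_ge0 // sqr_ge0.
  - by move=> x _; rewrite lee_fin.
  move=> x xI; have /andP[ax xb] : a < x < b by move: xI; rewrite /= in_itv. split => //.

  have /andP[l1 l2] := derive1_01 (lo u) a b x Hlo ax xb.
  have /andP[h1 h2] := derive1_01 (hi u) a b x Hhi ax xb.
  rewrite lee_fin; nra.
rewrite integral_cst //= lebesgue_measure_itv /= lte_fin ab -EFinD -EFinM.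
by [].
Qed.

Lemma integrable_cst_itv (a b c : R) :
  mu.-integrable `[a, b] (fun _ => c%:E).
Proof.
apply/integrableP; split; first exact: measurable_cst.
rewrite (eq_integral (fun _ => `|c|%:E)); last by move=> x _.
rewrite integral_cst //= lebesgue_measure_itv /=.
by case: ifP => _; rewrite -?EFinD -?EFinM ?mule0 ?ltry.
Qed.

Lemma CS_itv (g : R -> R) (a b D : R) : a < b ->
  measurable_fun `[a, b] g -> mu.-integrable `[a, b] (EFin \o g) ->
  (\int[mu]_(x in `[a, b]) ((g x) ^+ 2)%:E < +oo)%E ->
  (\int[mu]_(x in `[a, b]) (g x)%:E)%E = D%:E ->
  ((D ^+ 2 / (b - a))%:E <= \int[mu]_(x in `]a, b[) ((g x) ^+ 2)%:E)%E.
Proof.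
move=> ab mg ig g2 gD.
have mD : measurable (`[a, b] : set R) by exact: measurable_itv.
have mg2 : measurable_fun `[a, b] (EFin \o (fun x => (g x) ^+ 2)).
  by apply/measurable_EFinP; exact: measurable_funM.
have ig2 : mu.-integrable `[a, b] (fun x => ((g x) ^+ 2)%:E).
  apply/integrableP; split => //.
  under eq_integral => x _ do rewrite gee0_abs ?lee_fin ?sqr_ge0 //.
  exact: g2.
rewrite -(integral_itv_bndoo true false); last first.
  by apply: measurable_funS mg2 => //; exact: subset_itv_oo_cc.
set c := D / (b - a).
have ig' : mu.-integrable `[a, b] (fun x => (2 * c * g x)%:E - (c ^+ 2)%:E)%E.
  apply: integrableB => //; last exact: integrable_cst_itv.
  rewrite (_ : (fun x => (2 * c * g x)%:E) = (fun x => (2 * c)%:E * (g x)%:E)%E).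
    exact: integrableZl.
  by apply/funext => x; rewrite EFinM.
apply: (@le_trans _ _ (\int[mu]_(x in `[a, b]) ((2 * c * g x)%:E - (c ^+ 2)%:E))%E).
  rewrite integralB_EFin //; last exact: integrable_cst_itv.
    under eq_integral => x _ do rewrite EFinM.
    rewrite integralZl // gD integral_cst //= lebesgue_measure_itv /= lte_fin ab.
    have -> : ((2 * c)%:E * D%:E - (c ^+ 2)%:E * (b%:E + (- a)%:E))%E = ((2 * c * D - c ^+ 2 * (b - a))%:E) by []. rewrite lee_fin /c.
    have ba : b - a != 0 by rewrite subr_eq0 gt_eqF.
    rewrite le_eqVlt; apply/orP; left; apply/eqP; field; exact: ba.
  rewrite (_ : (EFin \o (fun x => 2 * c * g x)) = (fun x => (2 * c)%:E * (g x)%:E)%E).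
    exact: integrableZl.
  by apply/funext => x; rewrite EFinM.
apply: le_integral => // x _; rewrite -EFinB lee_fin.
have := sqr_ge0 (g x - c); rewrite expr2 => h; rewrite expr2; nra.
Qed.

Lemma W12_ae (f : R -> R) (a b : R) : a < b -> W12 f a b ->
  exists g : R -> R, [/\ measurable_fun `[a, b] g,
    mu.-integrable `[a, b] (EFin \o g),
    (\int[mu]_(x in `[a, b]) ((g x) ^+ 2)%:E < +oo)%E,
    (\int[mu]_(x in `[a, b]) (g x)%:E)%E = (f b - f a)%:E &
    {ae mu, forall x, a < x < b -> derive1 f x = g x}].
Proof.
move=> ab [g [mg ig g2 hF]]; exists g; split => //.
  by apply: hF; rewrite lexx andbT ltW.
have mD : measurable (`[a, b] : set R) by exact: measurable_itv.
have locG := integrable_locally mD ig.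
move: (locG) => /lebesgue_differentiation.
apply: filterS; first exact: (ae_filter_ringOfSetsType mu).
move=> x Lx /andP[ax xb].
set G := g \_ `[a, b].
have GE t : a <= t <= b -> G t = g t.
  by move=> tI; rewrite /G patchE mem_set //= in_itv.
have igG : mu.-integrable [set` Interval (BLeft a) (BRight b)] (EFin \o G).
  apply: (eq_integrable _ _ _ _ ig) => //.
  by move=> t; rewrite inE /= in_itv /= => tI; rewrite GE.
have aX : (BLeft a < BRight x)%E.
  by rewrite /= lte_fin.
have [dF eqF] := @FTC1_lebesgue_pt R G (BLeft a) x b xb igG aX Lx.
set F := fun y => (\int[mu]_(t in [set` Interval (BLeft a) (BRight y)]) G t)%R.
have FE y : a <= y <= b -> F y = f y - f a.
  move=> /andP[ay yb]; rewrite /F.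
  have -> : (\int[mu]_(t in [set` Interval (BLeft a) (BRight y)]) G t)%R =
            (\int[mu]_(t in `[a, y]) g t)%R.
    apply: eq_Rintegral => t; rewrite inE /= in_itv /= => /andP[at1 ty].
    by rewrite GE // at1 /= (le_trans ty yb).
  by rewrite /Rintegral hF ?ay ?yb.
rewrite -GE; last by rewrite !ltW.
rewrite -eqF.
have E : (fun h => h^-1 *: ((F \o shift x) (h *: 1) - F x)) =
         (fun h => h^-1 *: (F (h + x) - F x)).
  by apply/funext => h /=; rewrite [h *: 1]mulr1.
move: dF; rewrite /derivable E => dF.
apply: cvg_lim; first exact: Rhausdorff.
apply: cvg_trans dF.
apply: near_eq_cvg.
near=> h.
have hl : `|h| < Num.min (x - a) (b - x).
  by near: h; apply: dnbhs0_lt; rewrite lt_min; apply/andP; split; lra.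
move: hl; rewrite lt_min => /andP[hl1 hl2].
have hI : a <= h + x <= b.
  have h1 : h <= `|h| := ler_norm h.
  have h2 : - h <= `|h| by rewrite -normrN ler_norm.
  apply/andP; split; lra.
rewrite /= FE // FE ?(ltW ax) ?(ltW xb) //.
congr (_ *: _); lra.
Unshelve. all: by end_near. Qed.

Lemma integrable_sq (g : R -> R) (a b : R) :
  measurable_fun `[a, b] g ->
  (\int[mu]_(x in `[a, b]) ((g x) ^+ 2)%:E < +oo)%E ->
  mu.-integrable `]a, b[ (fun x => ((g x) ^+ 2)%:E).
Proof.
move=> mg g2.
have mD : measurable (`[a, b] : set R) by exact: measurable_itv.
have mg2 : measurable_fun `[a, b] (EFin \o (fun x => (g x) ^+ 2)).
  by apply/measurable_EFinP; exact: measurable_funM.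
have igc : mu.-integrable `[a, b] (fun x => ((g x) ^+ 2)%:E).
  apply/integrableP; split => //.
  under eq_integral => x _ do rewrite gee0_abs ?lee_fin ?sqr_ge0 //.
  exact: g2.
apply: (integrableS _ _ _ igc) => //.
exact: subset_itv_oo_cc.
Qed.

Lemma Dir_lower (v : R -> R * R) (a b : R) : a < b -> Q2_W12 v a b ->
  ((((lo v b - lo v a) ^+ 2 + (hi v b - hi v a) ^+ 2) / (b - a))%:E <= Dir v a b)%E.
Proof.
move=> ab [W1 W2].
have [g1 [mg1 ig1 g12 g1D ae1]] := W12_ae _ _ _ ab W1.
have [g2 [mg2 ig2 g22 g2D ae2]] := W12_ae _ _ _ ab W2.
have FF := ae_filter_ringOfSetsType mu.
have := filterS2 FF (fun x (H1 : a < x < b -> derive1 (lo v) x = g1 x)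
   (H2 : a < x < b -> derive1 (hi v) x = g2 x) =>
   (fun xI : a < x < b => conj (H1 xI) (H2 xI))) ae1 ae2.
case=> N [mN N0 sN].
have mD : measurable (`]a, b[ : set R) by exact: measurable_itv.
have i1 := integrable_sq _ _ _ mg1 g12.
have i2 := integrable_sq _ _ _ mg2 g22.
have mfS (g : R -> R) : measurable_fun `[a, b] g ->
    measurable_fun `]a, b[ (fun x => ((g x) ^+ 2)%:E).
  move=> mg; apply: (measurable_funS (measurable_itv `[a, b])); first exact: subset_itv_oo_cc.
  by apply/measurable_EFinP; exact: measurable_funM.
apply: (@le_trans _ _ (\int[mu]_(x in `]a, b[) ((g1 x) ^+ 2)%:E +
                       \int[mu]_(x in `]a, b[) ((g2 x) ^+ 2)%:E)%E).
  rewrite mulrDl EFinD; apply: leeD.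
    exact: CS_itv _ _ _ _ ab mg1 ig1 g12 g1D.
  exact: CS_itv _ _ _ _ ab mg2 ig2 g22 g2D.
have m1 := mfS _ mg1.
have m2 := mfS _ mg2.
have n0 (g : R -> R) : forall x, (`]a, b[%classic : set R) x -> (0 <= ((g x) ^+ 2)%:E)%E.
  by move=> x _; rewrite lee_fin sqr_ge0.
rewrite -(ge0_integralD mu mD (n0 g1) m1 (n0 g2) m2).
rewrite (negligible_integral mN mD _ N0); last first.
  exact: (integrableD _ i1 i2).
rewrite /Dir; apply: le_integral_nm.
- by move=> x _; rewrite adde_ge0 // lee_fin sqr_ge0.
- by move=> x _; rewrite lee_fin addr_ge0 // sqr_ge0.
move=> x [xD Nx]; split => //.
have xI : a < x < b by move: xD; rewrite /= in_itv.
case: (pselect (a < x < b -> derive1 (lo v) x = g1 x /\ derive1 (hi v) x = g2 x)).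
  by move=> /(_ xI) [-> ->]; rewrite EFinD.
by move=> nP; exfalso; apply: Nx; apply: sN.
Qed.

End A.

Theorem mainTheorem4 (R : realType) (u : R -> R * R) :
  pluri_diamond u ->
  forall a b : R, 0 <= a -> a < b -> b <= 1 ->
  forall v : R -> R * R, dir_minimizing v a b (u a) (u b) ->
    (Dir u a b <= 4%:E * Dir v a b)%E.
Proof.
move=> pu a b a0 ab b1 v [vW va vb _].
have up := @Dir_upper R u a b pu a0 ab b1.
have low := @Dir_lower R v a b ab vW.
have [_ _ _ _ sum] := @Pp_pluri R u pu a b a0 (ltW ab) b1.
have la : lo v a = lo u a by rewrite /lo (Q2eq_min _ va).
have lb : lo v b = lo u b by rewrite /lo (Q2eq_min _ vb).
have ha : hi v a = hi u a by rewrite /hi (Q2eq_max _ va).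
have hb : hi v b = hi u b by rewrite /hi (Q2eq_max _ vb).
rewrite la lb ha hb in low.
apply: (le_trans up); apply: (le_trans _ (lee_wpmul2l _ low)); last by [].
rewrite -EFinM lee_fin.
have ba : 0 < b - a by lra.
rewrite mulrA ler_pdivlMr //.
move: sum; set d1 := lo u b - lo u a; set d2 := hi u b - hi u a => sum.
have : (b - a) ^+ 2 <= (d1 + d2) ^+ 2.
  rewrite -subr_ge0 subr_sqr; apply: mulr_ge0; rewrite /d1 /d2; lra.
have := sqr_ge0 (d1 - d2).
rewrite !expr2 => h1 h2.
nra.
Qed.
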